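(* Consider a glass (a nonequilibrium state of the system) in internal equilibrium, relaxing at fixed temperature $T_0$ and pressure $P_0$ of the medium toward the equilibrium supercooled liquid. Then during relaxation $S>S_{\text{SCL}}$, and the entropy varies in time with a unique direction: $dS(t)/dt<0$ for every nonequilibrium state during relaxation, so that $S(T_0,P_0,t)$ approaches $S_{\text{SCL}}(T_0,P_0)$ from above.
   Context: The system $\Sigma$ is in contact with a large equilibrium medium at fixed $T_0,P_0$. The system is in internal equilibrium: its entropy $S(E,V,\boldsymbol{\xi})$ is a state function of energy $E$, volume $V$ and internal variables $\boldsymbol{\xi}$, with instantaneous temperature $T(t)$, pressure $P(t)$ and affinity $\mathbf{A}(t)$ defined by $\partial S/\partial E=1/T$, $\partial S/\partial V=P/T$, $\partial S/\partial\boldsymbol{\xi}=\mathbf{A}/T$. The second law requires $d_{\text{i}}S\ge0$, and since $dS,d_{\text{e}}S,dV,d\boldsymbol{\xi}$ are independent, it yields $[T_0-T(t)]dS(t)\ge0$ (strictly for a nonequilibrium state). During relaxation at fixed medium temperature the system's temperature satisfies $T(t)>T_0$, approaching $T_0$ from above. $S_{\text{SCL}}(T_0,P_0)$ is the equilibrium supercooled-liquid entropy at the medium's $T_0,P_0$. *)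

(* Defs.v *)
From Stdlib Require Import Reals.
From Coquelicot Require Import Coquelicot.

(* Main.v *)
Require Import Defs.
From Stdlib Require Import Reals Lra.
From Coquelicot Require Import Coquelicot.
Open Scope R_scope.

Theorem theorem3 (T0 P0 : R) (S_SCL : R -> R -> R) (S dS T : R -> R)
  (HdS : forall t, 0 <= t -> is_derive S t (dS t))
  (Hrelax : forall t, 0 <= t -> T t > T0)
  (Hsecond : forall t, 0 <= t -> (T0 - T t) * dS t > 0)
  (Hlim : is_lim S p_infty (S_SCL T0 P0)) :
  (forall t, 0 <= t -> dS t < 0) /\ (forall t, 0 <= t -> S t > S_SCL T0 P0).
Proof.
  assert (Hneg : forall t, 0 <= t -> dS t < 0).
  { intros t Ht. specialize (Hrelax t Ht). specialize (Hsecond t Ht).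
    destruct (Rlt_or_le (dS t) 0) as [h|h]; auto.
    assert ((T0 - T t) * dS t <= 0).
    { apply Rmult_le_0_r; lra. } lra. }
  assert (Hdec : forall a b, 0 <= a -> a < b -> S b < S a).
  { intros a b Ha Hab.
    destruct (MVT_gen S a b dS) as [c [Hc Heq]].
    - intros x Hx. apply HdS. rewrite Rmin_left in Hx; lra.
    - intros x Hx. apply continuity_pt_filterlim.
      apply (ex_derive_continuous (K:=R_AbsRing) (V:=R_NormedModule)). exists (dS x). apply HdS.
      rewrite Rmin_left in Hx; lra.
    - rewrite Rmin_left in Hc by lra. rewrite Rmax_right in Hc by lra.
      assert (dS c < 0) by (apply Hneg; lra).
      assert (dS c * (b - a) < 0).
      { apply Rmult_neg_pos; lra. } lra. }
  split; [exact Hneg|].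
  intros t Ht.
  assert (HL : Rbar_le (S_SCL T0 P0) (S (t+1))).
  { apply (is_lim_le_loc S (fun _ => S (t+1)) p_infty).
    - exists (t+1). intros x Hx. left. apply Hdec; lra.
    - exact Hlim.
    - apply is_lim_const. }
  simpl in HL. assert (S (t+1) < S t) by (apply Hdec; lra). lra.
Qed.
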